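(* Assume the scatter-step setting below. Then $$\mathbb{E}\max_{j,k\in\{1,\dots,h_{ps}\}}\big\|G_j-\nabla L(\theta_k)\big\|_2\le 3h_w\sigma'+3l\,\Delta(\theta_1,\dots,\theta_{h_{ps}}).$$
   Context: Coordinate-wise diameters: $\Delta_i(v_1,\dots,v_h)=\max_{j,k}|v_j[i]-v_k[i]|$, $\Delta=\sum_{i=1}^d\Delta_i$. Minimum–Diameter Averaging: for $f\ge0$, $q\ge2f+1$, $x_1,\dots,x_q\in\mathbb{R}^d$, $\mathrm{MDA}_f(x_1,\dots,x_q)$ is the average of the $x_i$, $i\in I^*$, where $I^*$ is an index set of size $q-f$ minimizing $\max_{i,j\in I}\|x_i-x_j\|_2$ over all $I\subset\{1,\dots,q\}$ with $|I|=q-f$ (ties arbitrary). Scatter-step setting: $L:\mathbb{R}^d\to\mathbb{R}$ differentiable with $l$-Lipschitz gradient; learning rate $\eta>0$; correct server parameters $\theta_1,\dots,\theta_{h_{ps}}\in\mathbb{R}^d$; correct workers' models $x_1,\dots,x_{h_w}\in\mathbb{R}^d$ with $\min_k\theta_k[i]\le x_r[i]\le\max_k\theta_k[i]$ for all coordinates $i$ and all $r$; random gradient estimates $g_1,\dots,g_{h_w}$ with $\mathbb{E}\|g_r-\nabla L(x_r)\|_2\le\sigma'$; integers $f_w\ge1$, $q_w\ge2f_w+1$; each correct server $j$ computes $G_j=\mathrm{MDA}_{f_w}$ of a list of $q_w$ vectors of which at least $q_w-f_w$ entries belong to $\{g_1,\dots,g_{h_w}\}$ and the others are arbitrary. *)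

(* Defs.v *)
From Stdlib Require Import Reals Lra List.
Import ListNotations.
Open Scope R_scope.

(* Vectors of R^d are represented as functions nat -> R; only the
   coordinates 0 .. d-1 are meaningful. *)
Definition vec := nat -> R.

Definition vsum_idx (d : nat) (F : nat -> R) : R :=
  fold_right Rplus 0 (map F (seq 0 d)).

Definition vsub (u v : vec) : vec := fun i => u i - v i.
Definition vadd (u v : vec) : vec := fun i => u i + v i.

Definition dot (d : nat) (u v : vec) : R := vsum_idx d (fun i => u i * v i).

Definition norm2 (d : nat) (v : vec) : R := sqrt (dot d v v).

Definition veq (d : nat) (u v : vec) : Prop := forall i, (i < d)%nat -> u i = v i.

Definition IsGradient (d : nat) (L : vec -> R) (gradL : vec -> vec) : Prop :=
  forall x : vec, forall eps : R, 0 < eps ->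
    exists delta : R, 0 < delta /\
      forall h : vec, norm2 d h < delta ->
        Rabs (L (vadd x h) - L x - dot d (gradL x) h) <= eps * norm2 d h.

Definition LipschitzGrad (d : nat) (gradL : vec -> vec) (l : R) : Prop :=
  forall u v : vec, norm2 d (vsub (gradL u) (gradL v)) <= l * norm2 d (vsub u v).

(* max over all pairs (j,k) with j,k < n of F j k  (0 if n = 0;
   used only for nonnegative F) *)
Definition maxpairs (n : nat) (F : nat -> nat -> R) : R :=
  fold_right Rmax 0 (map (fun p => F (fst p) (snd p)) (list_prod (seq 0 n) (seq 0 n))).

Definition Delta_i (h : nat) (v : nat -> vec) (i : nat) : R :=
  maxpairs h (fun j k => Rabs (v j i - v k i)).
Definition DeltaDiam (d h : nat) (v : nat -> vec) : R :=
  vsum_idx d (Delta_i h v).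

Definition diam (d : nat) (xs : nat -> vec) (I : list nat) : R :=
  fold_right Rmax 0
    (map (fun p => norm2 d (vsub (xs (fst p)) (xs (snd p)))) (list_prod I I)).

Definition avg (xs : nat -> vec) (I : list nat) : vec :=
  fun i => fold_right Rplus 0 (map (fun a => xs a i) I) / INR (length I).

Definition admissible (f q : nat) (I : list nat) : Prop :=
  NoDup I /\ length I = (q - f)%nat /\ (forall a, In a I -> (a < q)%nat).

(* y is a possible value of MDA_f(xs 0, ..., xs (q-1)) (ties broken arbitrarily) *)
Definition IsMDA (d f q : nat) (xs : nat -> vec) (y : vec) : Prop :=
  exists I : list nat, admissible f q I /\
    (forall J : list nat, admissible f q J -> diam d xs I <= diam d xs J) /\
    veq d y (avg xs I).

(* Abstract expectation: Int is the class of integrable real random variables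
   on the sample space Omega, E is the expectation: a normalized, linear,
   monotone functional on Int. *)
Definition IsExpectation {Omega : Type} (Int : (Omega -> R) -> Prop)
  (E : (Omega -> R) -> R) : Prop :=
  (forall c : R, Int (fun _ => c) /\ E (fun _ => c) = c) /\
  (forall f g, Int f -> Int g -> Int (fun w => f w + g w) /\
                E (fun w => f w + g w) = E f + E g) /\
  (forall (c : R) f, Int f -> Int (fun w => c * f w) /\ E (fun w => c * f w) = c * E f) /\
  (forall f g, Int f -> Int g -> (forall w, f w <= g w) -> E f <= E g).

(* Main.v *)
Require Import Defs.
From Stdlib Require Import Reals Lra Lia List Classical.
Import ListNotations.
Open Scope R_scope.

Definition sumL (ns : list nat) (F : nat -> R) : R := fold_right Rplus 0 (map F ns).

Lemma sumL_cons a ns F : sumL (a :: ns) F = F a + sumL ns F.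
Proof. reflexivity. Qed.

Lemma sumL_ext ns F1 F2 : (forall a, In a ns -> F1 a = F2 a) -> sumL ns F1 = sumL ns F2.
Proof.
  induction ns; intros H; simpl; auto.
  unfold sumL in *; simpl. rewrite H by (left; auto). rewrite IHns; auto.
  intros; apply H; right; auto.
Qed.

Lemma sumL_le ns F1 F2 : (forall a, In a ns -> F1 a <= F2 a) -> sumL ns F1 <= sumL ns F2.
Proof.
  induction ns; intros H; unfold sumL in *; simpl; try lra.
  assert (F1 a <= F2 a) by (apply H; left; auto).
  assert (fold_right Rplus 0 (map F1 ns) <= fold_right Rplus 0 (map F2 ns)).
  { apply IHns; intros; apply H; right; auto. } lra.
Qed.

Lemma sumL_nonneg ns F : (forall a, In a ns -> 0 <= F a) -> 0 <= sumL ns F.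
Proof.
  intros H. replace 0 with (sumL ns (fun _ => 0)).
  apply sumL_le; auto. clear H. induction ns; [reflexivity|]. rewrite sumL_cons, IHns; lra.
Qed.

Lemma sumL_plus ns F1 F2 : sumL ns (fun a => F1 a + F2 a) = sumL ns F1 + sumL ns F2.
Proof. induction ns; unfold sumL in *; simpl; lra. Qed.

Lemma sumL_scal ns c F : sumL ns (fun a => c * F a) = c * sumL ns F.
Proof. induction ns; unfold sumL in *; simpl; lra. Qed.

Lemma sumL_const_le ns F M : (forall a, In a ns -> F a <= M) -> sumL ns F <= INR (length ns) * M.
Proof.
  induction ns; intros H; [unfold sumL; simpl; lra|]. rewrite sumL_cons.
  assert (F a <= M) by (apply H; left; auto).
  assert (sumL ns F <= INR (length ns) * M).
  { apply IHns; intros; apply H; right; auto. }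
  change (length (a :: ns)) with (S (length ns)). rewrite S_INR. lra.
Qed.

Lemma sumL_ge_elem ns F r : (forall a, In a ns -> 0 <= F a) -> In r ns -> F r <= sumL ns F.
Proof.
  induction ns; intros H Hr; [destruct Hr|]. rewrite sumL_cons.
  destruct Hr as [<-|Hr].
  - assert (0 <= sumL ns F) by (apply sumL_nonneg; intros; apply H; right; auto). lra.
  - assert (F r <= sumL ns F) by (apply IHns; auto; intros; apply H; right; auto).
    assert (0 <= F a) by (apply H; left; auto). lra.
Qed.

Lemma norm2_eq d v : norm2 d v = sqrt (sumL (seq 0 d) (fun i => v i * v i)).
Proof. reflexivity. Qed.

Lemma norm2_ge0 d v : 0 <= norm2 d v.
Proof. apply sqrt_pos. Qed.

Lemma norm2_ext d u v : (forall i, (i < d)%nat -> u i = v i) -> norm2 d u = norm2 d v.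
Proof.
  intros H. rewrite !norm2_eq. f_equal. apply sumL_ext.
  intros a Ha. apply in_seq in Ha. rewrite H by lia. auto.
Qed.

Lemma sq_nonneg ns v : 0 <= sumL ns (fun i => v i * v i).
Proof. apply sumL_nonneg; intros; nra. Qed.

Lemma aux_cs s S T a b : 0 <= S -> 0 <= T -> s * s <= S * T -> 2 * s * a * b <= S * b * b + T * a * a.
Proof.
  intros HS HT Hs. destruct (Req_dec S 0) as [->|HS0].
  - rewrite Rmult_0_l in Hs. assert (s * s = 0) by nra.
    apply Rmult_integral in H. destruct H; subst; nra.
  - assert (0 < S) by lra.
    assert (S * (S * b * b + T * a * a - 2 * s * a * b) = (S*b - s*a)*(S*b-s*a) + (S*T - s*s)*(a*a)) by ring.
    assert (0 <= (S*T - s*s)*(a*a)) by (apply Rmult_le_pos; nra).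
    assert (0 <= (S*b - s*a)*(S*b-s*a)) by (pose proof (Rle_0_sqr (S*b-s*a)); unfold Rsqr in *; lra).
    assert (0 <= S * b * b + T * a * a - 2 * s * a * b); [|lra].
    apply (Rmult_le_reg_l S); lra.
Qed.

Lemma CS ns u v : sumL ns (fun i => u i * v i) * sumL ns (fun i => u i * v i)
   <= sumL ns (fun i => u i * u i) * sumL ns (fun i => v i * v i).
Proof.
  induction ns; rewrite ?sumL_cons; [unfold sumL; simpl; lra|].
  pose proof (sq_nonneg ns u). pose proof (sq_nonneg ns v).
  pose proof (aux_cs _ _ _ (u a) (v a) H H0 IHns). nra.
Qed.

Lemma norm2_tri d u v : norm2 d (vadd u v) <= norm2 d u + norm2 d v.
Proof.
  rewrite !norm2_eq. set (ns := seq 0 d).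
  set (A := sqrt (sumL ns (fun i => u i * u i))).
  set (B := sqrt (sumL ns (fun i => v i * v i))).
  assert (HA : A * A = sumL ns (fun i => u i * u i)) by (apply sqrt_sqrt, sq_nonneg).
  assert (HB : B * B = sumL ns (fun i => v i * v i)) by (apply sqrt_sqrt, sq_nonneg).
  assert (0 <= A) by apply sqrt_pos. assert (0 <= B) by apply sqrt_pos.
  pose proof (CS ns u v). set (s := sumL ns (fun i => u i * v i)) in *.
  assert (s <= A * B).
  { apply Rsqr_incr_0_var; [|nra]. unfold Rsqr. rewrite <- HA, <- HB in H1. nra. }
  assert (E : sumL ns (fun i => vadd u v i * vadd u v i) = A*A + 2 * s + B*B).
  { rewrite HA, HB. unfold s. rewrite <- sumL_scal, <- !sumL_plus. apply sumL_ext. intros; unfold vadd; ring. }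
  pose proof (sq_nonneg ns (vadd u v)). rewrite E in *.
  rewrite <- (sqrt_square (A + B)) by lra. apply sqrt_le_1; [lra| nra | nra].
Qed.

Lemma norm2_sub_tri d u v w : norm2 d (vsub u w) <= norm2 d (vsub u v) + norm2 d (vsub v w).
Proof.
  rewrite (norm2_ext d (vsub u w) (vadd (vsub u v) (vsub v w))).
  apply norm2_tri. intros; unfold vsub, vadd; ring.
Qed.

Lemma norm2_sym d u v : norm2 d (vsub u v) = norm2 d (vsub v u).
Proof. rewrite !norm2_eq. f_equal. apply sumL_ext; intros; unfold vsub; ring. Qed.

Lemma norm2_scal d c v : norm2 d (fun i => c * v i) = Rabs c * norm2 d v.
Proof.
  rewrite !norm2_eq. rewrite (sumL_ext _ _ (fun i => (c * c) * (v i * v i))) by (intros; ring).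
  rewrite sumL_scal. rewrite sqrt_mult; [| pose proof (Rle_0_sqr c); unfold Rsqr in *; lra | apply sq_nonneg].
  f_equal. rewrite <- (sqrt_Rsqr_abs c). reflexivity.
Qed.

Lemma norm2_zero d : norm2 d (fun _ => 0) = 0.
Proof.
  rewrite norm2_eq.
  rewrite sumL_scal. rewrite Rmult_0_l. apply sqrt_0.
Qed.

Lemma norm2_sumL d I (W : nat -> vec) :
  norm2 d (fun i => sumL I (fun a => W a i)) <= sumL I (fun a => norm2 d (W a)).
Proof.
  induction I.
  - unfold sumL; simpl. rewrite norm2_zero. lra.
  - rewrite sumL_cons.
    rewrite (norm2_ext d _ (vadd (W a) (fun i => sumL I (fun a0 => W a0 i)))) by (intros; reflexivity).
    pose proof (norm2_tri d (W a) (fun i => sumL I (fun a0 => W a0 i))). lra.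
Qed.

Lemma norm2_l1 d v : norm2 d v <= vsum_idx d (fun i => Rabs (v i)).
Proof.
  rewrite norm2_eq. change (vsum_idx d ?F) with (sumL (seq 0 d) F).
  set (T := sumL (seq 0 d) (fun i => Rabs (v i))).
  assert (0 <= T) by (apply sumL_nonneg; intros; apply Rabs_pos).
  rewrite <- (sqrt_square T) by auto. apply sqrt_le_1; [apply sq_nonneg| nra|].
  unfold T. clear. induction (seq 0 d); [unfold sumL; simpl; lra|].
  rewrite !sumL_cons.
  assert (0 <= sumL l (fun i => Rabs (v i))) by (apply sumL_nonneg; intros; apply Rabs_pos).
  pose proof (Rabs_pos (v a)).
  assert (Rabs (v a) * Rabs (v a) = v a * v a) by (rewrite <- Rabs_mult; apply Rabs_right; nra).
  nra.
Qed.

Lemma fmax_ge (l : list R) a : In a l -> a <= fold_right Rmax 0 l.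
Proof.
  induction l; simpl; [tauto|]. intros [<-|H].
  - apply Rmax_l.
  - eapply Rle_trans; [apply IHl; auto| apply Rmax_r].
Qed.

Lemma fmax_le (l : list R) B : 0 <= B -> (forall a, In a l -> a <= B) -> fold_right Rmax 0 l <= B.
Proof.
  induction l; simpl; intros HB H; auto.
  apply Rmax_lub; auto.
Qed.

Lemma fmax_ge0 (l : list R) : 0 <= fold_right Rmax 0 l.
Proof. induction l; simpl; [lra|]. eapply Rle_trans; [apply IHl|apply Rmax_r]. Qed.

Lemma maxpairs_ge n F j k : (j < n)%nat -> (k < n)%nat -> F j k <= maxpairs n F.
Proof.
  intros Hj Hk. unfold maxpairs. apply fmax_ge.
  apply (in_map (fun p => F (fst p) (snd p)) _ (j, k)). apply in_prod; apply in_seq; lia.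
Qed.

Lemma maxpairs_le n F B : 0 <= B -> (forall j k, (j < n)%nat -> (k < n)%nat -> F j k <= B) ->
  maxpairs n F <= B.
Proof.
  intros HB H. unfold maxpairs. apply fmax_le; auto.
  intros a Ha. apply in_map_iff in Ha. destruct Ha as [[j k] [<- Hin]].
  apply in_prod_iff in Hin. destruct Hin as [Hj Hk]. apply in_seq in Hj, Hk. simpl. apply H; lia.
Qed.

Lemma diam_ge d xs I a b : In a I -> In b I -> norm2 d (vsub (xs a) (xs b)) <= diam d xs I.
Proof.
  intros Ha Hb. unfold diam. apply fmax_ge.
  apply (in_map (fun p => norm2 d (vsub (xs (fst p)) (xs (snd p)))) _ (a, b)). apply in_prod; auto.
Qed.

Lemma diam_le d xs I B : 0 <= B -> (forall a b, In a I -> In b I -> norm2 d (vsub (xs a) (xs b)) <= B) ->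
  diam d xs I <= B.
Proof.
  intros HB H. unfold diam. apply fmax_le; auto.
  intros z Hz. apply in_map_iff in Hz. destruct Hz as [[a b] [<- Hin]].
  apply in_prod_iff in Hin. destruct Hin. simpl. apply H; auto.
Qed.

Lemma avg_bound d xs I y M : (0 < length I)%nat ->
  (forall a, In a I -> norm2 d (vsub (xs a) y) <= M) ->
  norm2 d (vsub (avg xs I) y) <= M.
Proof.
  intros HI H. set (n := INR (length I)).
  assert (Hn : 0 < n) by (apply lt_0_INR; auto).
  assert (Hs : forall i, fold_right Rplus 0 (map (fun a => xs a i) I) - n * y i
                = sumL I (fun a => vsub (xs a) y i)).
  { intros i. unfold n. clear. induction I; [unfold sumL; simpl; lra|].
    rewrite sumL_cons. change (length (a :: I)) with (S (length I)). rewrite S_INR.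
    simpl. unfold sumL in IHI. unfold sumL, vsub in *. lra. }
  rewrite (norm2_ext d _ (fun i => (/ n) * sumL I (fun a => vsub (xs a) y i))).
  2:{ intros i _. rewrite <- Hs. unfold vsub, avg. fold n. field. lra. }
  rewrite norm2_scal. rewrite Rabs_right by (apply Rle_ge, Rlt_le, Rinv_0_lt_compat; auto).
  eapply Rle_trans.
  { apply Rmult_le_compat_l; [apply Rlt_le, Rinv_0_lt_compat; auto|]. apply norm2_sumL. }
  eapply Rle_trans.
  { apply Rmult_le_compat_l; [apply Rlt_le, Rinv_0_lt_compat; auto|]. apply sumL_const_le. exact H. }
  fold n. right. field. lra.
Qed.

Lemma coord_bound hps (theta : nat -> vec) i a b a1 a2 b1 b2 :
  (a1 < hps)%nat -> (a2 < hps)%nat -> (b1 < hps)%nat -> (b2 < hps)%nat ->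
  theta a1 i <= a <= theta a2 i -> theta b1 i <= b <= theta b2 i ->
  Rabs (a - b) <= Delta_i hps theta i.
Proof.
  intros. unfold Delta_i.
  pose proof (maxpairs_ge hps (fun j k => Rabs (theta j i - theta k i)) a2 b1 H0 H1).
  pose proof (maxpairs_ge hps (fun j k => Rabs (theta j i - theta k i)) b2 a1 H2 H).
  simpl in *. pose proof (Rle_abs (theta a2 i - theta b1 i)).
  pose proof (Rle_abs (theta b2 i - theta a1 i)).
  apply Rabs_le. lra.
Qed.

Lemma Delta_i_ge0 hps theta i : 0 <= Delta_i hps theta i.
Proof. apply fmax_ge0. Qed.

Lemma DeltaDiam_ge0 d hps theta : 0 <= DeltaDiam d hps theta.
Proof. apply sumL_nonneg. intros; apply Delta_i_ge0. Qed.

Lemma l1_bound d hps theta (u v : vec) :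
  (forall i, (i < d)%nat -> Rabs (u i - v i) <= Delta_i hps theta i) ->
  norm2 d (vsub u v) <= DeltaDiam d hps theta.
Proof.
  intros H. eapply Rle_trans; [apply norm2_l1|].
  apply sumL_le. intros a Ha. apply in_seq in Ha. apply H. lia.
Qed.

Lemma firstn_sub (C : list nat) n : NoDup C -> NoDup (firstn n C) /\ (forall a, In a (firstn n C) -> In a C).
Proof.
  intros H. rewrite <- (firstn_skipn n C) in H. split.
  - eapply NoDup_app_remove_r; eauto.
  - intros a Ha. rewrite <- (firstn_skipn n C). apply in_or_app; auto.
Qed.

Lemma pigeon (I J : list nat) q m : NoDup I -> NoDup J -> length I = m -> length J = m ->
  (q < m + m)%nat -> (forall a, In a I -> (a < q)%nat) -> (forall a, In a J -> (a < q)%nat) ->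
  exists c, In c I /\ In c J.
Proof.
  intros HI HJ LI LJ Hq BI BJ. apply NNPP. intros Hn.
  assert (ND : NoDup (I ++ J)).
  { apply NoDup_app; auto. intros a Ha Hb. apply Hn. eauto. }
  assert (incl (I ++ J) (seq 0 q)).
  { intros a Ha. apply in_app_or in Ha. apply in_seq. destruct Ha as [Ha|Ha];
    [apply BI in Ha|apply BJ in Ha]; lia. }
  pose proof (NoDup_incl_length ND H). rewrite length_app, length_seq in H0. lia.
Qed.

Lemma core
  (d : nat) (gradL : vec -> vec) (l : R) (Hl : 0 <= l)
  (Hlip : LipschitzGrad d gradL l)
  (hps hw : nat) (theta x : nat -> vec)
  (Hx : forall r i, (r < hw)%nat -> (i < d)%nat ->
          exists k1 k2, (k1 < hps)%nat /\ (k2 < hps)%nat /\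
            theta k1 i <= x r i /\ x r i <= theta k2 i)
  (Omega : Type) (Int : (Omega -> R) -> Prop) (E : (Omega -> R) -> R)
  (HE : IsExpectation Int E)
  (g : nat -> Omega -> vec) (sigma' : R)
  (Hg : forall r, (r < hw)%nat ->
          Int (fun w => norm2 d (vsub (g r w) (gradL (x r)))) /\
          E (fun w => norm2 d (vsub (g r w) (gradL (x r)))) <= sigma')
  (fw qw : nat) (Hfw : (1 <= fw)%nat) (Hqw : (2 * fw + 1 <= qw)%nat)
  (inp : nat -> Omega -> nat -> vec) (G : nat -> Omega -> vec)
  (Hinp : forall j w, (j < hps)%nat ->
          exists C : list nat, NoDup C /\ (qw - fw <= length C)%nat /\
            forall a, In a C -> (a < qw)%nat /\
              exists r, (r < hw)%nat /\ veq d (inp j w a) (g r w))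
  (HG : forall j w, (j < hps)%nat -> IsMDA d fw qw (inp j w) (G j w))
  (Hmeas : Int (fun w => maxpairs hps
                  (fun j k => norm2 d (vsub (G j w) (gradL (theta k)))))) :
  E (fun w => maxpairs hps (fun j k => norm2 d (vsub (G j w) (gradL (theta k)))))
    <= 3 * INR hw * sigma' + 2 * l * DeltaDiam d hps theta.
Proof.
  set (D := DeltaDiam d hps theta).
  assert (HD : 0 <= D) by apply DeltaDiam_ge0.
  set (Fr := fun r w => norm2 d (vsub (g r w) (gradL (x r)))).
  set (Sw := fun w => sumL (seq 0 hw) (fun r => Fr r w)).
  assert (HSw0 : forall w, 0 <= Sw w) by (intros; apply sumL_nonneg; intros; apply norm2_ge0).
  assert (HFr : forall r w, (r < hw)%nat -> Fr r w <= Sw w).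
  { intros r w Hr. apply (sumL_ge_elem _ (fun r => Fr r w)).
    - intros; apply norm2_ge0.
    - apply in_seq; lia. }
  assert (Dxx : forall r r', (r < hw)%nat -> (r' < hw)%nat -> norm2 d (vsub (x r) (x r')) <= D).
  { intros r r' Hr Hr'. apply l1_bound. intros i Hi.
    destruct (Hx r i Hr Hi) as [a1 [a2 [? [? [? ?]]]]].
    destruct (Hx r' i Hr' Hi) as [b1 [b2 [? [? [? ?]]]]].
    eapply coord_bound with (a1 := a1) (a2 := a2) (b1 := b1) (b2 := b2); eauto. }
  assert (Dxt : forall r k, (r < hw)%nat -> (k < hps)%nat -> norm2 d (vsub (x r) (theta k)) <= D).
  { intros r k Hr Hk. apply l1_bound. intros i Hi.
    destruct (Hx r i Hr Hi) as [a1 [a2 [? [? [? ?]]]]].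
    eapply coord_bound with (a1 := a1) (a2 := a2) (b1 := k) (b2 := k); eauto; lra. }
  assert (PW : forall w j k, (j < hps)%nat -> (k < hps)%nat ->
     norm2 d (vsub (G j w) (gradL (theta k))) <= 3 * Sw w + 2 * l * D).
  { intros w j k Hj Hk.
    destruct (HG j w Hj) as [I [[NDI [LI BI]] [Hmin Hveq]]].
    destruct (Hinp j w Hj) as [C [NDC [LC HC]]].
    set (J := firstn (qw - fw) C).
    destruct (firstn_sub C (qw - fw) NDC) as [NDJ InJ]. fold J in NDJ, InJ.
    assert (LJ : length J = (qw - fw)%nat) by (apply firstn_length_le; auto).
    assert (BJ : forall a, In a J -> (a < qw)%nat) by (intros a Ha; apply HC, InJ, Ha).
    assert (AJ : admissible fw qw J) by (split; [|split]; auto).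
    destruct (pigeon I J qw (qw - fw) NDI NDJ LI LJ ltac:(lia) BI BJ) as [c [cI cJ]].
    destruct (HC c (InJ c cJ)) as [_ [r [Hr Hcr]]].
    assert (DJ : diam d (inp j w) J <= 2 * Sw w + l * D).
    { apply diam_le; [pose proof (HSw0 w); nra|].
      intros a b Ha Hb.
      destruct (HC a (InJ a Ha)) as [_ [r1 [Hr1 H1]]].
      destruct (HC b (InJ b Hb)) as [_ [r2 [Hr2 H2]]].
      rewrite (norm2_ext d _ (vsub (g r1 w) (g r2 w))) by (intros i Hi; unfold vsub; rewrite H1, H2 by auto; auto).
      pose proof (norm2_sub_tri d (g r1 w) (gradL (x r1)) (g r2 w)).
      pose proof (norm2_sub_tri d (gradL (x r1)) (gradL (x r2)) (g r2 w)).
      pose proof (Hlip (x r1) (x r2)).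
      pose proof (Dxx r1 r2 Hr1 Hr2).
      pose proof (HFr r1 w Hr1). pose proof (HFr r2 w Hr2). unfold Fr in *.
      rewrite (norm2_sym d (gradL (x r2)) (g r2 w)) in *.
      assert (l * norm2 d (vsub (x r1) (x r2)) <= l * D) by (apply Rmult_le_compat_l; auto).
      lra. }
    assert (DI : diam d (inp j w) I <= 2 * Sw w + l * D) by (eapply Rle_trans; [apply (Hmin J AJ)| exact DJ]).
    assert (GA : norm2 d (vsub (G j w) (inp j w c)) <= 2 * Sw w + l * D).
    { rewrite (norm2_ext d _ (vsub (avg (inp j w) I) (inp j w c))) by (intros i Hi; unfold vsub; rewrite Hveq by auto; auto).
      apply avg_bound; [lia|]. intros a Ha. eapply Rle_trans; [apply diam_ge; eauto|auto]. }
    pose proof (norm2_sub_tri d (G j w) (inp j w c) (gradL (theta k))).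
    rewrite (norm2_ext d (vsub (inp j w c) (gradL (theta k))) (vsub (g r w) (gradL (theta k)))) in H
      by (intros i Hi; unfold vsub; rewrite Hcr by auto; auto).
    pose proof (norm2_sub_tri d (g r w) (gradL (x r)) (gradL (theta k))).
    pose proof (Hlip (x r) (theta k)). pose proof (Dxt r k Hr Hk).
    pose proof (HFr r w Hr). unfold Fr in *.
    assert (l * norm2 d (vsub (x r) (theta k)) <= l * D) by (apply Rmult_le_compat_l; auto).
    lra. }
  destruct HE as [Hc [Hadd [Hsc Hmon]]].
  assert (ES : forall ns, (forall r, In r ns -> (r < hw)%nat) ->
     Int (fun w => sumL ns (fun r => Fr r w)) /\ E (fun w => sumL ns (fun r => Fr r w)) <= INR (length ns) * sigma').
  { induction ns as [|a ns IH]; intros Hns.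
    - unfold sumL; simpl. destruct (Hc 0) as [H1 H2]. split; auto. lra.
    - destruct IH as [I1 E1]. { intros; apply Hns; right; auto. }
      assert (Ha : (a < hw)%nat) by (apply Hns; left; auto).
      destruct (Hg a Ha) as [I2 E2].
      destruct (Hadd (Fr a) (fun w => sumL ns (fun r => Fr r w)) I2 I1) as [I3 E3].
      change (fun w => sumL (a :: ns) (fun r => Fr r w)) with (fun w => Fr a w + sumL ns (fun r => Fr r w)).
      split; auto. rewrite E3. change (length (a :: ns)) with (S (length ns)). rewrite S_INR.
      unfold Fr in *. lra. }
  destruct (ES (seq 0 hw)) as [IS ES']. { intros r Hr; apply in_seq in Hr; lia. }
  rewrite length_seq in ES'. fold Sw in IS, ES'.
  destruct (Hsc 3 Sw IS) as [IS3 ES3].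
  destruct (Hc (2 * l * D)) as [IC EC].
  destruct (Hadd (fun w => 3 * Sw w) (fun _ => 2 * l * D) IS3 IC) as [IT ET].
  eapply Rle_trans.
  { apply (Hmon _ (fun w => 3 * Sw w + 2 * l * D)); auto.
    intros w. apply maxpairs_le; [pose proof (HSw0 w); nra|]. intros; apply PW; auto. }
  rewrite ET, ES3, EC. lra.
Qed.

Theorem mainTheorem10
  (d : nat) (L : vec -> R) (gradL : vec -> vec) (l eta : R)
  (HgradL : IsGradient d L gradL) (Hlip : LipschitzGrad d gradL l)
  (Heta : 0 < eta)
  (hps hw : nat) (theta x : nat -> vec)
  (Hx : forall r i, (r < hw)%nat -> (i < d)%nat ->
          exists k1 k2, (k1 < hps)%nat /\ (k2 < hps)%nat /\
            theta k1 i <= x r i /\ x r i <= theta k2 i)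
  (Omega : Type) (Int : (Omega -> R) -> Prop) (E : (Omega -> R) -> R)
  (HE : IsExpectation Int E)
  (g : nat -> Omega -> vec) (sigma' : R)
  (Hg : forall r, (r < hw)%nat ->
          Int (fun w => norm2 d (vsub (g r w) (gradL (x r)))) /\
          E (fun w => norm2 d (vsub (g r w) (gradL (x r)))) <= sigma')
  (fw qw : nat) (Hfw : (1 <= fw)%nat) (Hqw : (2 * fw + 1 <= qw)%nat)
  (inp : nat -> Omega -> nat -> vec) (G : nat -> Omega -> vec)
  (Hinp : forall j w, (j < hps)%nat ->
          exists C : list nat, NoDup C /\ (qw - fw <= length C)%nat /\
            forall a, In a C -> (a < qw)%nat /\
              exists r, (r < hw)%nat /\ veq d (inp j w a) (g r w))
  (HG : forall j w, (j < hps)%nat -> IsMDA d fw qw (inp j w) (G j w))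
  (Hmeas : Int (fun w => maxpairs hps
                  (fun j k => norm2 d (vsub (G j w) (gradL (theta k)))))) :
  E (fun w => maxpairs hps (fun j k => norm2 d (vsub (G j w) (gradL (theta k)))))
    <= 3 * INR hw * sigma' + 3 * l * DeltaDiam d hps theta.
Proof.
  destruct d as [|d'].
  - assert (Hl0 : LipschitzGrad 0 gradL 0).
    { intros u v. unfold norm2, dot, vsum_idx; simpl. rewrite sqrt_0. lra. }
    pose proof (core 0 gradL 0 (Rle_refl 0) Hl0 hps hw theta x Hx Omega Int E HE g sigma' Hg
                 fw qw Hfw Hqw inp G Hinp HG Hmeas) as H.
    change (DeltaDiam 0 hps theta) with 0 in *. lra.
  - assert (Hl : 0 <= l).
    { set (u := fun i : nat => if Nat.eqb i 0 then 1 else 0).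
      pose proof (Hlip u (fun _ => 0)).
      assert (1 <= norm2 (S d') (vsub u (fun _ => 0))).
      { rewrite norm2_eq. rewrite <- sqrt_1. apply sqrt_le_1; [lra| apply sq_nonneg|].
        change (seq 0 (S d')) with (0%nat :: seq 1 d'). rewrite sumL_cons.
        assert (0 <= sumL (seq 1 d') (fun i => vsub u (fun _ => 0) i * vsub u (fun _ => 0) i)) by apply sq_nonneg.
        unfold vsub, u at 1 2; simpl. unfold vsub in H0. lra. }
      pose proof (norm2_ge0 (S d') (vsub (gradL u) (gradL (fun _ => 0)))).
      nra. }
    pose proof (core (S d') gradL l Hl Hlip hps hw theta x Hx Omega Int E HE g sigma' Hg
                 fw qw Hfw Hqw inp G Hinp HG Hmeas) as H.
    pose proof (DeltaDiam_ge0 (S d') hps theta). nra.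
Qed.
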